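(* Under the standing assumptions below, let $k\in\{0,\dots,n-1\}$. If $c\in I$ and $x_{k+1}\notin\mathrm{var}(c)$, then $I_{k+1}(c)=I_k(c)$. Moreover, writing $I(x_{k+1})=\{c_1,\dots,c_m\}$ with $c_1\prec c_2\prec\dots\prec c_m$, we have $I_{k+1}(c_1)=I_k(c_1)$ and, for every $i<m$, $I_{k+1}(c_{i+1})=I_k(c_{i+1})\cup I_{k+1}(c_i)$.
   Context: Standing assumptions: $I$ is a finite set of weighted constraints with default values on a finite domain $D$ such that distinct constraints have distinct variable sets, $\mathcal H(I)=(\mathrm{var}(I),\{\mathrm{var}(c)\mid c\in I\})$ is $\beta$-acyclic, and $(x_1,\dots,x_n)$ is a $\beta$-elimination order of $\mathcal H(I)$ (an enumeration of $\mathrm{var}(I)$ such that for each $k$, $x_{k+1}$ is a nest point—the edges containing it are totally ordered by inclusion—of the hypergraph with vertices $\mathrm{var}(I)\setminus X_k$ and edges $\{e\setminus X_k\}\setminus\{\emptyset\}$). $X_k=\{x_1,\dots,x_k\}$. For $c,d\in I$: $c\prec d$ iff there is $k$ with $\mathrm{var}(c)\setminus X_k\subsetneq\mathrm{var}(d)\setminus X_k$ (this is a total order); $c\preceq d$ iff $c\prec d$ or $c=d$. Relations $\prec_k$ are defined inductively: $\prec_0=\emptyset$; $c\prec_{k+1}d$ iff $c\prec_k d$ or there is $e\in I$ with $c\preceq_k e\prec d$ and $x_{k+1}\in\mathrm{var}(d)\cap\mathrm{var}(e)$; here $c\preceq_k d$ iff $c=d$ or $c\prec_k d$. For $c\in I$,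 $I_k(c)=\{d\in I\mid d\preceq_k c\}$. For a variable $x$, $I(x)=\{c\in I\mid x\in\mathrm{var}(c)\}$. *)

(* Defs.v *)
From mathcomp Require Import all_boot.
Set Implicit Arguments. Unset Strict Implicit. Unset Printing Implicit Defensive.

(* Constraints form a finite type C (the instance I is all of C); each
   constraint c has a scope var c over the finite type V of variables.
   The weight functions / default values play no role in the lemma. *)

(* The elimination order (x_1,...,x_n) is x : 'I_n -> V, x_{i+1} = x i. *)
Definition Xset (V : finType) (n : nat) (x : 'I_n -> V) (k : nat) : {set V} :=
  [set x i | i in [pred i : 'I_n | i < k]].

Definition varI (V C : finType) (var : C -> {set V}) : {set V} :=
  \bigcup_(c : C) var c.

Definition verts_k (V C : finType) (var : C -> {set V}) n (x : 'I_n -> V) k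
  : {set V} := varI var :\: Xset x k.

Definition edges_k (V C : finType) (var : C -> {set V}) n (x : 'I_n -> V) k
  : {set {set V}} := [set var c :\: Xset x k | c : C] :\ set0.

Definition nest_point (V : finType) (Vs : {set V}) (E : {set {set V}}) (v : V)
  : bool :=
  (v \in Vs) &&
  [forall e in E, forall f in E,
     (v \in e) ==> (v \in f) ==> (e \subset f) || (f \subset e)].

Definition beta_elim_order (V C : finType) (var : C -> {set V}) n
  (x : 'I_n -> V) : Prop :=
  [/\ injective x, [set x i | i : 'I_n] = varI var &
      forall k : 'I_n, nest_point (verts_k var x k) (edges_k var x k) (x k)].

Definition beta_acyclic (V C : finType) (var : C -> {set V}) : Prop :=
  exists n (x : 'I_n -> V), beta_elim_order var x.

Definition prec (V C : finType) (var : C -> {set V}) n (x : 'I_n -> V)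
  : rel C := fun c d =>
  [exists k : 'I_n.+1, (var c :\: Xset x k) \proper (var d :\: Xset x k)].

Fixpoint precK (V C : finType) (var : C -> {set V}) n (x : 'I_n -> V)
  (k : nat) : rel C :=
  match k with
  | 0 => fun _ _ => false
  | k'.+1 => fun c d =>
      precK var x k' c d ||
      [exists e : C,
         [&& (c == e) || precK var x k' c e,
             prec var x e d &
             [exists i : 'I_n,
                [&& (i == k' :> nat), x i \in var d & x i \in var e]]]]
  end.

Definition Ik (V C : finType) (var : C -> {set V}) n (x : 'I_n -> V)
  (k : nat) (c : C) : {set C} :=
  [set d | (d == c) || precK var x k d c].

(* Main.v *)
Require Import Defs.
From mathcomp Require Import all_boot.

Section Aux.
Variables (V C : finType) (var : C -> {set V}) (n : nat) (x : 'I_n -> V).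

Lemma Xset_mono j j2 : j <= j2 -> Xset x j \subset Xset x j2.
Proof.
move=> le; apply/subsetP=> z /imsetP[i]; rewrite inE => lt ->.
by apply/imsetP; exists i => //; rewrite inE (leq_trans lt le).
Qed.

Lemma subD_mono (A B X Y : {set V}) :
  A :\: X \subset B :\: X -> X \subset Y -> A :\: Y \subset B :\: Y.
Proof.
move=> /subsetP AB /subsetP XY; apply/subsetP=> z; rewrite !inE => /andP[zY zA].
have zX : z \notin X by apply: contra zY; apply: XY.
have := AB z; rewrite !inE zX zA /= => /(_ isT) ->; by rewrite zY.
Qed.

Lemma prec_irr c : ~~ prec var x c c.
Proof. by apply/existsP=> -[k]; rewrite properE subxx. Qed.

Lemma prec_trans : transitive (prec var x).
Proof.
move=> d c e /existsP[k1 H1] /existsP[k2 H2]; apply/existsP.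
case: (leqP k1 k2) => le.
  exists k2; apply: sub_proper_trans H2.
  have h1 := proper_sub H1. have h2 := Xset_mono _ _ le. have := subD_mono _ _ _ _ h1 h2. exact.
exists k1; apply: proper_sub_trans H1 _.
have h1 := proper_sub H2. have h2 := Xset_mono _ _ (ltnW le). exact: subD_mono _ _ _ _ h1 h2.
Qed.
End Aux.

Theorem lemma7 (V C : finType) (var : C -> {set V}) (n : nat) (x : 'I_n -> V)
  (var_inj : injective var)
  (hacyc : beta_acyclic var)
  (horder : beta_elim_order var x)
  (k : 'I_n) :
  (forall c : C, x k \notin var c -> Ik var x k.+1 c = Ik var x k c) /\
  (forall (c1 : C) (cs' : seq C),
     let cs := c1 :: cs' in
     uniq cs ->
     (forall c : C, (c \in cs) = (x k \in var c)) ->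
     sorted (prec var x) cs ->
     Ik var x k.+1 c1 = Ik var x k c1 /\
     (forall i : nat, i.+1 < size cs ->
        Ik var x k.+1 (nth c1 cs i.+1)
        = Ik var x k (nth c1 cs i.+1) :|: Ik var x k.+1 (nth c1 cs i))).
Proof.
have exk : forall d e, [exists i : 'I_n,
                [&& (i == k :> nat), x i \in var d & x i \in var e]]
                = (x k \in var d) && (x k \in var e).
  move=> d e; apply/existsP/andP.
    by case=> i /and3P[/eqP/val_inj -> ->].
  by case=> ? ?; exists k; apply/and3P.
split.
  move=> c nc; apply/setP=> d; rewrite !inE /=.
  case: (d == c) => //=; case: (precK var x k d c) => //=.
  apply/existsP=> -[e /and3P[_ _]]; by rewrite exk (negbTE nc).
move=> c1 cs' cs ucs mem srt.
have tr := @prec_trans V C var n x.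
have ord : forall i j, i < size cs -> j < size cs ->
    prec var x (nth c1 cs j) (nth c1 cs i) -> j < i.
  move=> i j si sj p; case: (ltnP j i) => // le.
  move: le; rewrite leq_eqVlt => /orP[/eqP eij|lt].
    by move: p; rewrite eij (negbTE (@prec_irr V C var n x _)).
  have p2 := sorted_ltn_nth tr c1 srt i j si sj lt.
  by move: (tr _ _ _ p p2); rewrite (negbTE (@prec_irr V C var n x _)).
have inv : forall e, x k \in var e -> exists2 j, j < size cs & e = nth c1 cs j.
  move=> e he; have ecs : e \in cs by rewrite mem.
  by exists (index e cs); rewrite ?index_mem ?nth_index.
split.
  apply/setP=> d; rewrite !inE /=.
  case: (d == c1) => //=; case: (precK var x k d c1) => //=.
  apply/existsP=> -[e /and3P[_ p]]; rewrite exk => /andP[_ he].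
  have [j sj ej] := inv e he.
  by move: (ord 0 j isT sj); rewrite -ej => /(_ p).
move=> i si.
have si' : i < size cs by apply: ltnW.
have hci : x k \in var (nth c1 cs i) by rewrite -mem mem_nth.
have hci1 : x k \in var (nth c1 cs i.+1) by rewrite -mem mem_nth.
have pii : prec var x (nth c1 cs i) (nth c1 cs i.+1)
  by apply: sorted_ltn_nth.
apply/setP=> d; rewrite !inE /=.
set ci := nth c1 cs i; set ci1 := nth c1 cs i.+1.
apply/idP/idP.
  case/orP=> [->//|/orP[->|]]; first by rewrite orbT.
  case/existsP=> e /and3P[de p]; rewrite exk => /andP[_ he].
  have [j sj ej] := inv e he.
  have lt : j < i.+1 by apply: ord; rewrite // -ej.
  move: lt; rewrite ltnS leq_eqVlt => /orP[/eqP eji|lt].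
    have eci : e = ci by rewrite ej eji.
    by move: de; rewrite eci => /orP[->|->]; rewrite !orbT.
  apply/orP; right; apply/orP; right; apply/orP; right.
  apply/existsP; exists e; rewrite de exk he hci /=.
  by rewrite ej andbT; exact: (sorted_ltn_nth tr c1 srt j i sj si' lt).
case/orP=> [/orP[->//|->]|]; first by rewrite orbT.
case/orP=> [/eqP->|/orP[pk|]].
- apply/orP; right; apply/orP; right; apply/existsP; exists ci.
  by rewrite eqxx pii exk hci hci1.
- apply/orP; right; apply/orP; right; apply/existsP; exists ci.
  by rewrite pk orbT pii exk hci hci1.
case/existsP=> e /and3P[de p]; rewrite exk => /andP[_ he].
apply/orP; right; apply/orP; right; apply/existsP; exists e.
by rewrite de (tr _ _ _ p pii) exk hci1 he.
Qed.
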